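(* Let $n\ge2$, $r\ge1$, $q_1,q_2\in\mathbb{C}$ with $q_1q_2\ne0$ and $q=-q_2/q_1$ not a root of unity, and $[n]_q=1+q+\cdots+q^{n-1}$. Then the rules $s_i\cdot(v_1\otimes\cdots\otimes v_r)=v_1\otimes\cdots\otimes v_{i+1}\otimes v_i\otimes\cdots\otimes v_r$ (swap of the $i$th and $(i+1)$st factors, $1\le i\le r-1$) and $p_j\cdot(v_1\otimes\cdots\otimes v_r)=v_1\otimes\cdots\otimes Pv_j\otimes\cdots\otimes v_r$ ($1\le j\le r$) extend to a well-defined structure of left $\mathcal{P}'_r([n]_q)$-module on $\mathbf{E}^{\otimes r}$.
   Context: $\mathbf{E}=\mathbb{C}^n$ with basis $e_1,\dots,e_n$; $P\in\operatorname{End}(\mathbf{E})$ is given by $Pe_j=q^{j-1}(e_1+\cdots+e_n)$. Partial permutations of $\{1,\dots,r\}$ are bijections $d:X\to Y$ between subsets $X=\mathrm{dom}(d)$, $Y=\mathrm{im}(d)$, written on the right and composed by $x(d_1\circ d_2)=(xd_1)d_2$. For $z\ne0$, $\mathcal{P}'_r(z)$ is the algebra with basis the partial permutations and product $d_1d_2=z^N(d_1\circ d_2)$, $N=r-|\mathrm{im}(d_1)\cup\mathrm{dom}(d_2)|$ (the subalgebra of the partition algebra spanned by partial-permutation diagrams). It is generated by $s_i$ (the permutation swapping $i,i+1$) and $p_j$ (the identity map of $\{1,\dots,r\}\setminus\{j\}$). *)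

(* Defs.v *)
From mathcomp Require Import all_boot all_order all_algebra.
From mathcomp Require Import reals.
From mathcomp.real_closed Require Import complex.
Set Implicit Arguments. Unset Strict Implicit. Unset Printing Implicit Defensive.
Import Order.TTheory GRing.Theory Num.Theory.
Local Open Scope ring_scope.

(* ---------- Partial permutations of {0,...,r-1} ---------------------------
   A partial permutation d : X -> Y is encoded as d : {ffun 'I_r -> option 'I_r}
   with d x = Some (x d) for x in dom(d), None otherwise; it must be injective
   on its domain. Maps are written on the right. *)
Definition pperm (r : nat) := {ffun 'I_r -> option 'I_r}.

Definition is_pperm (r : nat) (d : pperm r) : bool :=
  [forall x, forall y, (d x != None) ==> (d x == d y) ==> (x == y)].

Definition pp_dom (r : nat) (d : pperm r) : {set 'I_r} := [set x | d x != None].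
Definition pp_im (r : nat) (d : pperm r) : {set 'I_r} :=
  [set y | [exists x, d x == Some y]].

Definition pp_comp (r : nat) (d1 d2 : pperm r) : pperm r :=
  [ffun x => obind (fun y => d2 y) (d1 x)].

(* exponent N = r - |im(d1) u dom(d2)| in the product d1 d2 = z^N (d1 o d2) *)
Definition pp_N (r : nat) (d1 d2 : pperm r) : nat :=
  (r - #|pp_im d1 :|: pp_dom d2|)%N.

Definition pp_id (r : nat) : pperm r := [ffun x => Some x].

(* s_i : swaps i and i+1 (0-based i, with i+1 < r) *)
Definition swapo (r : nat) (i j x : 'I_r) : 'I_r :=
  if x == i then j else if x == j then i else x.

Definition pp_s (r : nat) (i j : 'I_r) : pperm r := [ffun x => Some (swapo i j x)].

Definition pp_p (r : nat) (j : 'I_r) : pperm r :=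
  [ffun x => if x == j then None else Some x].

(* ---------- Operators on E^{(x) r}, E = C^n -----------------------------
   The basis of E^{(x) r} is e_{w 0} (x) ... (x) e_{w (r-1)}, w : 'I_r -> 'I_n.
   An endomorphism is given by its matrix A u w (coefficient of basis vector u
   in the image of basis vector w). *)
Definition word (n r : nat) := {ffun 'I_r -> 'I_n}.
Definition op (C : Type) (n r : nat) := word n r -> word n r -> C.

Definition op_mul (C : nzRingType) (n r : nat) (A B : op C n r) : op C n r :=
  fun u w => \sum_(v : word n r) A u v * B v w.
Definition op_one (C : nzRingType) (n r : nat) : op C n r :=
  fun u w => (u == w)%:R.
Definition op_scale (C : nzRingType) (n r : nat) (c : C) (A : op C n r) : op C n r :=
  fun u w => c * A u w.

(* action of s_i: swap of the i-th and j-th tensor factors: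
   e_w |-> e_{w o (i j)}, i.e. new factor i is old factor j *)
Definition op_swap (C : nzRingType) (n r : nat) (i j : 'I_r) : op C n r :=
  fun u w => (u == [ffun x => w (swapo i j x)])%:R.

(* action of P on the j-th tensor factor, where P e_k = q^k (e_0+...+e_{n-1})
   (0-based k; this is P e_k = q^{k-1}(e_1+...+e_n) in 1-based indexing). *)
Definition op_P (C : nzRingType) (n r : nat) (q : C) (j : 'I_r) : op C n r :=
  fun u w => if [forall x, (x != j) ==> (u x == w x)] then q ^+ (w j : nat) else 0.

Definition qint (C : nzRingType) (n : nat) (q : C) : C := \sum_(k < n) q ^+ k.

(* Main.v *)
Require Import Defs.
From mathcomp Require Import all_boot all_order all_algebra.
From mathcomp Require Import reals.
From mathcomp.real_closed Require Import complex.
From Stdlib Require Import FunctionalExtensionality.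
From mathcomp Require Import zify ring.
Set Implicit Arguments. Unset Strict Implicit. Unset Printing Implicit Defensive.
Import Order.TTheory GRing.Theory Num.Theory.
Local Open Scope ring_scope.

Definition inim (r : nat) (d : pperm r) (t : 'I_r) : bool := [exists x, d x == Some t].

Definition rhoq (C : comNzRingType) (n r : nat) (q : C) (d : pperm r) : op C n r :=
  fun u w => ([forall x, match d x with Some y => u x == w y | None => true end])%:R *
     \prod_(t : 'I_r) (if inim d t then 1 else q ^+ (w t : nat)).

Lemma prod_bool (C : comNzRingType) (I : finType) (b : pred I) :
  \prod_(i : I) ((b i)%:R : C) = ([forall i, b i])%:R.
Proof.
case: (boolP [forall i, b i]) => [/fintype.forallP H | /fintype.forallPn [i Hi]].
  by rewrite big1 // => i _; rewrite H.
by rewrite (bigD1 i) //= (negbTE Hi) mul0r.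
Qed.

Lemma pp_inj r (d : pperm r) x y t : is_pperm d -> d x = Some t -> d y = Some t -> x = y.
Proof.
rewrite /is_pperm => /fintype.forallP /(_ x) /fintype.forallP /(_ y) H dx dy.
by rewrite dx dy eqxx /= in H; apply/eqP.
Qed.

Lemma sum_delta (C : comNzRingType) n (F : 'I_n -> C) c :
  \sum_(k : 'I_n) (k == c)%:R * F k = F c.
Proof.
rewrite (bigD1 c) //= eqxx mul1r big1 ?addr0 // => k /negbTE ->.
by rewrite mul0r.
Qed.

Lemma rho_split_y (C : comNzRingType) n r (q : C) (d : pperm r) (u v : word n r) :
  rhoq q d u v = \prod_t ([forall x, (d x == Some t) ==> (u x == v t)]%:R *
                          (if inim d t then 1 else q ^+ (v t : nat))).
Proof.
rewrite /rhoq big_split /= prod_bool; congr (_%:R * _).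
congr (nat_of_bool _); apply/idP/idP => /fintype.forallP H; apply/fintype.forallP.
- move=> t; apply/fintype.forallP => x; apply/implyP => /eqP dx.
  by have := H x; rewrite dx.
- move=> x; case dx: (d x) => [t|] //.
  by have /fintype.forallP /(_ x) := H t; rewrite dx eqxx.
Qed.

Lemma rho_split_x (C : comNzRingType) n r (q : C) (d : pperm r) (v w : word n r) :
  rhoq q d v w = (\prod_x (match d x with Some t => (v x == w t)%:R | None => 1 end)) *
     \prod_t (if inim d t then 1 else q ^+ (w t : nat)).
Proof.
rewrite /rhoq -prod_bool; congr (_ * _).
by apply: eq_bigr => x _; case: (d x).
Qed.

Lemma h_comp (C : comNzRingType) n r (q : C) (d1 d2 : pperm r) (u w : word n r) t :
  is_pperm d1 ->
  \sum_(k : 'I_n) (([forall x, (d1 x == Some t) ==> (u x == k)]%:R *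
      (if inim d1 t then 1 else q ^+ (k : nat))) *
      (match d2 t with Some y => (k == w y)%:R | None => 1 end))
  = (match d2 t with Some y => ([forall x, (d1 x == Some t) ==> (u x == w y)])%:R | None => 1 end) *
    (match d2 t with Some y => if inim d1 t then 1 else q ^+ (w y : nat) | None => 1 end) *
    (match d2 t with Some _ => 1 | None => if inim d1 t then 1 else qint n q end).
Proof.
move=> H1; case e: (d2 t) => [y|].
  under eq_bigr => k _ do rewrite mulrC.
  by rewrite sum_delta !mulr1.
under eq_bigr => k _ do rewrite mulr1.
rewrite !mul1r; case: (boolP (inim d1 t)) => [/fintype.existsP [x0 /eqP dx0]|ni].
  under eq_bigr => k _ do rewrite mulr1.
  transitivity (\sum_(k : 'I_n) (k == u x0)%:R * (1 : C)); last by rewrite sum_delta.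
  apply: eq_bigr => k _; rewrite mulr1; congr (nat_of_bool _)%:R.
  apply/idP/idP.
    by move/fintype.forallP/(_ x0); rewrite dx0 eqxx /= eq_sym.
  move/eqP ->; apply/fintype.forallP => x; apply/implyP => /eqP dx.
  by rewrite (pp_inj H1 dx dx0).
rewrite /qint; apply: eq_bigr => k _.
rewrite (_ : [forall x, _] = true) ?mul1r //.
apply/fintype.forallP => x; apply/implyP => /eqP dx.
by case/negP: ni; apply/fintype.existsP; exists x; rewrite dx.
Qed.

Lemma prodI (C : comNzRingType) n r (d1 d2 : pperm r) (u w : word n r) :
  \prod_t (match d2 t with Some y => ([forall x, (d1 x == Some t) ==> (u x == w y)])%:R | None => 1 end)
  = ([forall x, match pp_comp d1 d2 x with Some y => u x == w y | None => true end])%:R :> C.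
Proof.
transitivity (([forall t, match d2 t with Some y => [forall x, (d1 x == Some t) ==> (u x == w y)] | None => true end])%:R : C).
  by rewrite -prod_bool; apply: eq_bigr => t _; case: (d2 t).
congr (nat_of_bool _)%:R.
apply/idP/idP => /fintype.forallP H; apply/fintype.forallP.
  move=> x; rewrite ffunE; case dx: (d1 x) => [t|] //=.
  have := H t; case: (d2 t) => [y|] // /fintype.forallP /(_ x).
  by rewrite dx eqxx.
move=> t; case e: (d2 t) => [y|] //; apply/fintype.forallP => x; apply/implyP => /eqP dx.
by have := H x; rewrite ffunE dx /= e.
Qed.

Lemma prodZ (C : comNzRingType) r (d1 d2 : pperm r) (z : C) :
  \prod_t (match d2 t with Some _ => 1 | None => if inim d1 t then 1 else z end)
  = z ^+ pp_N d1 d2.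
Proof.
transitivity (\prod_(t in ~: (pp_im d1 :|: pp_dom d2)) z).
  rewrite [RHS]big_mkcond; apply: eq_bigr => t _.
  rewrite !inE /inim; case: (d2 t) => //=; first by rewrite orbT.
  by rewrite orbF; case: [exists _, _].
rewrite prodr_const /pp_N; congr (_ ^+ _).
have E : (#|pp_im d1 :|: pp_dom d2| + #|~: (pp_im d1 :|: pp_dom d2)|)%N = r.
  by rewrite cardsC card_ord.
lia.
Qed.

Lemma prodQ (C : comNzRingType) n r (q : C) (d1 d2 : pperm r) (w : word n r) :
  is_pperm d2 ->
  \prod_t (if inim d2 t then 1 else q ^+ (w t : nat)) *
  \prod_t (match d2 t with Some y => if inim d1 t then 1 else q ^+ (w y : nat) | None => 1 end)
  = \prod_t (if inim (pp_comp d1 d2) t then 1 else q ^+ (w t : nat)).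
Proof.
move=> H2.
transitivity (\prod_t ((if inim d2 t then 1 else q ^+ (w t : nat)) *
   \prod_y (if (d2 y == Some t) && ~~ inim d1 y then q ^+ (w t : nat) else 1))).
  rewrite big_split /=; congr (_ * _).
  rewrite exchange_big /=; apply: eq_bigr => y _.
  case e: (d2 y) => [t0|] /=.
    rewrite (bigD1 t0) //= eqxx /= big1 ?mulr1; first by case: (inim d1 y).
    move=> t ne; case: eqP => [[E]|_] //.
    by rewrite E eqxx in ne.
  by rewrite big1.
apply: eq_bigr => t _.
case: (boolP (inim d2 t)) => [/fintype.existsP [y0 /eqP e0]|ni].
  rewrite mul1r (bigD1 y0) //= e0 eqxx /= big1 ?mulr1; last first.
    move=> y ne; case: eqP => [E|_] //=.
    by move: ne; rewrite (pp_inj H2 E e0) eqxx.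
  rewrite (_ : inim (pp_comp d1 d2) t = inim d1 y0); first by case: (inim d1 y0).
  apply/idP/idP => /fintype.existsP [x /eqP].
    rewrite ffunE; case dx: (d1 x) => [y|] //= dy.
    by apply/fintype.existsP; exists x; rewrite dx (pp_inj H2 dy e0).
  by move=> dx; apply/fintype.existsP; exists x; rewrite ffunE dx /= e0.
rewrite big1 ?mulr1; last first.
  move=> y _; case: eqP => [E|_] //=.
  by case/negP: ni; apply/fintype.existsP; exists y; rewrite E.
rewrite (_ : inim (pp_comp d1 d2) t = false) //.
rewrite /inim; apply/negbTE/negP => /fintype.existsP [x]; rewrite ffunE; case: (d1 x) => [y|] //= /eqP E.
by case/negP: ni; apply/fintype.existsP; exists y; rewrite E.
Qed.

Lemma rho_mul (C : comNzRingType) n r (q : C) (d1 d2 : pperm r) :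
  is_pperm d1 -> is_pperm d2 ->
  op_mul (rhoq (n:=n) q d1) (rhoq q d2) = op_scale (qint n q ^+ pp_N d1 d2) (rhoq q (pp_comp d1 d2)).
Proof.
move=> H1 H2; apply: functional_extensionality => u; apply: functional_extensionality => w.
rewrite /op_mul /op_scale.
under eq_bigr => v _ do rewrite rho_split_y rho_split_x mulrA -big_split /=.
rewrite -big_distrl /=.
rewrite -(bigA_distr_bigA (fun t (k : 'I_n) => ([forall x, (d1 x == Some t) ==> (u x == k)]%:R *
      (if inim d1 t then 1 else q ^+ (k : nat))) *
      (match d2 t with Some y => (k == w y)%:R | None => 1 end))) /=.
under eq_bigr => t _ do rewrite h_comp //.
rewrite !big_split /= prodI prodZ.
rewrite /rhoq -(prodQ q d1 w H2).
ring.
Qed.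

Lemma swapoK r (i j t : 'I_r) : swapo i j (swapo i j t) = t.
Proof.
rewrite /swapo.
case: (eqVneq t i) => [->|ni]; first by rewrite eqxx; case: (eqVneq j i) => [->|] //; rewrite eqxx.
case: (eqVneq t j) => [->|nj]; first by rewrite eqxx.
by rewrite (negbTE ni) (negbTE nj).
Qed.

Theorem lemma9p1 (R : realType) (n r : nat) (q1 q2 : R[i]) :
  (2 <= n)%N -> (1 <= r)%N -> q1 * q2 != 0 ->
  let q := - q2 / q1 in
  (forall k : nat, (0 < k)%N -> q ^+ k != 1) ->
  let z := qint n q in
  exists rho : pperm r -> op R[i] n r,
    [/\ rho (pp_id r) = @op_one R[i] n r,
        (forall d1 d2 : pperm r, is_pperm d1 -> is_pperm d2 ->
           op_mul (rho d1) (rho d2) = op_scale (z ^+ pp_N d1 d2) (rho (pp_comp d1 d2))),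
        (forall i j : 'I_r, (i.+1 = j)%N -> rho (pp_s i j) = @op_swap R[i] n r i j) &
        (forall j : 'I_r, rho (pp_p j) = @op_P R[i] n r q j)].
Proof.
move=> _ _ _ q _ z.
exists (rhoq (n:=n) q); split.
- apply: functional_extensionality => u; apply: functional_extensionality => w.
  rewrite /rhoq /op_one big1; last first.
    by move=> t _; rewrite (_ : inim _ _ = true) //; apply/fintype.existsP; exists t; rewrite ffunE.
  rewrite mulr1; congr (nat_of_bool _)%:R.
  apply/idP/idP => [/fintype.forallP H|/eqP ->].
    by apply/eqP/ffunP => x; have := H x; rewrite ffunE => /eqP.
  by apply/fintype.forallP => x; rewrite ffunE.
- by move=> d1 d2 H1 H2; apply: rho_mul.
- move=> i j _.
  apply: functional_extensionality => u; apply: functional_extensionality => w.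
  rewrite /rhoq /op_swap big1; last first.
    move=> t _; rewrite (_ : inim _ _ = true) //; apply/fintype.existsP.
    by exists (swapo i j t); rewrite ffunE swapoK.
  rewrite mulr1; congr (nat_of_bool _)%:R.
  apply/idP/idP => [/fintype.forallP H|/eqP ->].
    by apply/eqP/ffunP => x; have := H x; rewrite !ffunE => /eqP.
  by apply/fintype.forallP => x; rewrite !ffunE.
- move=> j.
  apply: functional_extensionality => u; apply: functional_extensionality => w.
  rewrite /rhoq /op_P (bigD1 j) //= big1; last first.
    move=> t nt; rewrite (_ : inim _ _ = true) //; apply/fintype.existsP.
    by exists t; rewrite ffunE (negbTE nt).
  rewrite (_ : inim _ _ = false) ?mulr1; last first.
    apply/negbTE/negP => /fintype.existsP [x]; rewrite ffunE.
    by case: ifP => [_|/eqP nx] //= /eqP [E].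
  rewrite (_ : [forall x, _] = [forall x, (x != j) ==> (u x == w x)]).
    by case: [forall x, _]; rewrite ?mul1r ?mul0r.
  apply: eq_forallb => x; rewrite ffunE.
  by case: eqP.
Qed.
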